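(* Consider a finite tabular MDP with a unique optimal policy $\pi^*$ and full reachability ($d_\rho^\pi(s)\ge d_{\min}>0$ for all states $s$ and all full-support policies $\pi$). For any temperature $\eta\in(0,\infty)$, the discrete DG update $\pi_{t+1}(a|s)=\pi_t(a|s)e^{\alpha w_t(s,a)U_t(s,a)}/Z^t_s$ with sufficiently small step size $\alpha>0$ satisfies $V(\pi_t)\to V^*$ and $\pi_t\to\pi^*$.
   Context: A finite MDP $(\mathcal S,\mathcal A,P,r,\gamma,\rho)$ with $r(s,a)\in[0,1]$, $\gamma\in[0,1)$; tabular softmax policies $\pi_\theta(a|s)=e^{\theta(s,a)}/\sum_{a'}e^{\theta(s,a')}$. $V^\pi,Q^\pi$ are discounted value functions, $V(\pi)=\mathbb{E}_{s\sim\rho}V^\pi(s)$, $V^*=V(\pi^* )$, $d_\rho^\pi(s)=(1-\gamma)\sum_{t\ge0}\gamma^t\Pr(s_t=s\mid\rho,\pi)$. $U_t(s,a):=Q^{\pi_t}(s,a)-V^{\pi_t}(s)$, $\ell_t(s,a):=-\log\pi_t(a|s)$, $w_t(s,a):=\sigma(U_t(s,a)\ell_t(s,a)/\eta)$ with $\sigma(x)=1/(1+e^{-x})$, and $Z^t_s:=\sum_{a'}\pi_t(a'|s)e^{\alpha w_t(s,a')U_t(s,a')}$. *)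

(* Defs.v *)
From HB Require Import structures.
From mathcomp Require Import all_boot all_order all_algebra.
From mathcomp Require Import all_classical all_reals all_analysis.
Set Implicit Arguments. Unset Strict Implicit. Unset Printing Implicit Defensive.
Import Order.TTheory GRing.Theory Num.Theory numFieldNormedType.Exports.
Local Open Scope ring_scope.

Section MDP.
Context {R : realType} {S A : finType}.
Variables (P : S -> A -> S -> R) (* P s a s' = P(s' | s, a) *)
          (r : S -> A -> R) (gamma : R).

Definition is_policy (pi : S -> A -> R) : Prop :=
  (forall s a, 0 <= pi s a) /\ (forall s, \sum_(a : A) pi s a = 1).

Definition full_support (pi : S -> A -> R) : Prop := forall s a, 0 < pi s a.

Definition softmax (theta : S -> A -> R) : S -> A -> R :=
  fun s a => expR (theta s a) / \sum_(a' : A) expR (theta s a').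

Definition pt_mass (s0 : S) : S -> R := fun s => if s == s0 then 1 else 0.

Definition step_dist (pi : S -> A -> R) (mu : S -> R) : S -> R :=
  fun s' => \sum_(s : S) \sum_(a : A) mu s * pi s a * P s a s'.

Definition state_dist (pi : S -> A -> R) (mu : S -> R) (t : nat) : S -> R :=
  iter t (step_dist pi) mu.

Definition r_pi (pi : S -> A -> R) (s : S) : R := \sum_(a : A) pi s a * r s a.

Definition Vf (pi : S -> A -> R) (s : S) : R :=
  limn (series ((fun t : nat => gamma ^+ t * \sum_(s' : S) state_dist pi (pt_mass s) t s' * r_pi pi s') : R^nat)).

Definition Qf (pi : S -> A -> R) (s : S) (a : A) : R :=
  r s a + gamma * \sum_(s' : S) P s a s' * Vf pi s'.

Definition Adv (pi : S -> A -> R) (s : S) (a : A) : R := Qf pi s a - Vf pi s.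

Definition Vrho (rho : S -> R) (pi : S -> A -> R) : R := \sum_(s : S) rho s * Vf pi s.

Definition occ (rho : S -> R) (pi : S -> A -> R) (s : S) : R :=
  (1 - gamma) * limn (series ((fun t : nat => gamma ^+ t * state_dist pi rho t s) : R^nat)).

Definition optimal_policy (pistar : S -> A -> R) : Prop :=
  is_policy pistar /\ forall pi, is_policy pi -> forall s, Vf pi s <= Vf pistar s.

Definition sigmoid (x : R) : R := 1 / (1 + expR (- x)).

Definition dg_weight (eta : R) (pi : S -> A -> R) (s : S) (a : A) : R :=
  sigmoid (Adv pi s a * (- ln (pi s a)) / eta).

Definition dg_Z (eta alpha : R) (pi : S -> A -> R) (s : S) : R :=
  \sum_(a' : A) pi s a' * expR (alpha * dg_weight eta pi s a' * Adv pi s a').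

Definition dg_step (eta alpha : R) (pi : S -> A -> R) : S -> A -> R :=
  fun s a => pi s a * expR (alpha * dg_weight eta pi s a * Adv pi s a) / dg_Z eta alpha pi s.

Definition dg_iter (eta alpha : R) (pi0 : S -> A -> R) (t : nat) : S -> A -> R :=
  iter t (dg_step eta alpha) pi0.

End MDP.

(* Main.v *)
Require Import Defs.
From HB Require Import structures.
From mathcomp Require Import all_boot all_order all_algebra.
From mathcomp Require Import all_classical all_reals all_analysis.
Import Order.TTheory GRing.Theory Num.Theory numFieldNormedType.Exports.
Local Open Scope ring_scope. Local Open Scope classical_set_scope.

From mathcomp Require Import ring lra.
Unset Printing Implicit Defensive.

Lemma cvg_fsum (R : realType) (I : finType) (F : I -> nat -> R) (l : I -> R) :
  (forall i, F i n @[n --> \oo] --> l i) ->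
  (\sum_(i : I) F i n) @[n --> \oo] --> \sum_(i : I) l i.
Proof.
move=> H; rewrite unlock /=.
elim: (index_enum I) => [|i s IH] /=.
  exact: cvg_cst.
exact: cvgD.
Qed.


Lemma expR_ge1' (R : realType) (x : R) : 0 <= x -> 1 <= expR x.
Proof. by move=> hx; rewrite leNgt expR_lt1 -leNgt. Qed.

Lemma expm1_mul_ge0 (R : realType) (x c : R) : 0 <= c -> 0 <= (expR (c * x) - 1) * x.
Proof.
move=> hc; have [hx|hx] := leP 0 x.
  apply: mulr_ge0 => //; rewrite subr_ge0; apply: expR_ge1'; exact: mulr_ge0.
apply: mulr_le0 => //; last exact: ltW.
rewrite subr_le0 expR_le1; apply: mulr_ge0_le0 => //; exact: ltW.
Qed.

Lemma expm1_le_x_exp (R : realType) (x : R) : expR x - 1 <= x * expR x.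
Proof.
have h := expR_ge1Dx (- x).
have e : expR (- x) * expR x = 1 by rewrite mulrC expRxMexpNx_1.
have hx := expR_gt0 x.
suff : (1 - x) * expR x <= 1 by move=> h'; rewrite mulrBl mul1r in h'; lra.
rewrite -[X in _ <= X]e; apply: ler_wpM2r; [exact: ltW | exact: h].
Qed.

Lemma expm1_split (R : realType) (x e : R) : 0 < e ->
  expR x - 1 <= e * expR e + (expR x - 1) * x / e.
Proof.
move=> he.
have h0 : 0 <= (expR x - 1) * x by have := @expm1_mul_ge0 R x 1 ler01; rewrite mul1r.
have hee : 0 < e * expR e by apply: mulr_gt0 => //; exact: expR_gt0.
have [hx|hx] := leP x 0.
  have : expR x - 1 <= 0 by rewrite subr_le0 expR_le1.
  have : 0 <= (expR x - 1) * x / e by apply: divr_ge0 => //; exact: ltW.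
  lra.
have [hxe|hxe] := leP x e.
  have h1 := expm1_le_x_exp R x.
  have h2 : expR x <= expR e by rewrite ler_expR.
  have h3 : x * expR x <= e * expR e.
    apply: ler_pM => //; exact: ltW.
  have : 0 <= (expR x - 1) * x / e by apply: divr_ge0 => //; exact: ltW.
  lra.
have hx1 : 0 <= expR x - 1 by rewrite subr_ge0; apply: expR_ge1'; exact: ltW.
have : expR x - 1 <= (expR x - 1) * x / e.
  rewrite -mulrA ler_peMr //; rewrite ler_pdivlMr // mul1r; exact: ltW.
move=> ?; lra.
Qed.

Lemma cvg_ev (R : realType) (u : nat -> R) (l e : R) : u @ \oo --> l -> 0 < e ->
  exists N, forall n, (N <= n)%N -> `|l - u n| < e.
Proof.
move=> /cvgrPdist_lt /(_ e) H he; have [N _ HN] := H he.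
by exists N => n hn; apply: HN.
Qed.
Arguments cvg_ev {R u l e}.

Lemma sum_le_one_term (R : realType) (I : finType) (F : I -> R) i :
  (forall j, 0 <= F j) -> F i <= \sum_(j : I) F j.
Proof.
move=> h; rewrite (bigD1 i) //= lerDl; apply: sumr_ge0 => j _; exact: h.
Qed.

Section Bellman.
Context {R : realType} {S A : finType}.
Variables (P : S -> A -> S -> R) (r : S -> A -> R) (gamma : R).
Hypotheses (P0 : forall s a s', 0 <= P s a s')
  (P1 : forall s a, \sum_(s' : S) P s a s' = 1)
  (r01 : forall s a, 0 <= r s a <= 1) (g01 : 0 <= gamma < 1).

Definition Kp (pi : S -> A -> R) (s s' : S) : R := \sum_(a : A) pi s a * P s a s'.

Lemma step_lin (pi : S -> A -> R) (c : S -> R) (mu : S -> S -> R) y :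
  step_dist P pi (fun x => \sum_(i : S) c i * mu i x) y =
  \sum_(i : S) c i * step_dist P pi (mu i) y.
Proof.
rewrite /step_dist.
transitivity (\sum_(s : S) \sum_(a : A) \sum_(i : S) c i * (mu i s * pi s a * P s a y)).
  apply: eq_bigr => s _; apply: eq_bigr => a _.
  by rewrite !mulr_suml; apply: eq_bigr => i _; rewrite !mulrA.
transitivity (\sum_(s : S) \sum_(i : S) \sum_(a : A) c i * (mu i s * pi s a * P s a y)).
  by apply: eq_bigr => s _; rewrite exchange_big.
rewrite exchange_big /=; apply: eq_bigr => i _.
rewrite mulr_sumr; apply: eq_bigr => s _; by rewrite mulr_sumr.
Qed.

Lemma sd_lin (pi : S -> A -> R) (c : S -> R) (mu : S -> S -> R) t y :
  state_dist P pi (fun x => \sum_(i : S) c i * mu i x) t y =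
  \sum_(i : S) c i * state_dist P pi (mu i) t y.
Proof.
elim: t y => [|t IH] y //=.
rewrite /state_dist /= -/(state_dist P pi _ t).
have -> : state_dist P pi (fun x : S => \sum_i c i * mu i x) t =
          (fun x => \sum_i c i * state_dist P pi (mu i) t x).
  by apply/funext => x; exact: IH.
by rewrite step_lin.
Qed.

Lemma step_pt (pi : S -> A -> R) s :
  step_dist P pi (pt_mass s) = (fun y => \sum_(s' : S) Kp pi s s' * pt_mass s' y).
Proof.
apply/funext => y; rewrite /step_dist (bigD1 s) //= [X in _ + X]big1; last first.
  move=> s1 /negbTE ne; apply: big1 => a _; by rewrite /pt_mass ne !mul0r.
rewrite addr0 [RHS](bigD1 y) //= [X in _ + X]big1; last first.
  move=> s1 /negbTE ne; by rewrite /pt_mass eq_sym ne mulr0.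
rewrite /pt_mass !eqxx addr0 mulr1 /Kp; apply: eq_bigr => a _; by rewrite mul1r.
Qed.

Definition fr (pi : S -> A -> R) (s : S) (t : nat) : R :=
  \sum_(s' : S) state_dist P pi (pt_mass s) t s' * r_pi r pi s'.

Lemma fr0 pi s : fr pi s 0 = r_pi r pi s.
Proof.
rewrite /fr /= (bigD1 s) //= [X in _ + X]big1; last first.
  by move=> s1 /negbTE ne; rewrite /pt_mass ne mul0r.
by rewrite /pt_mass eqxx mul1r addr0.
Qed.

Lemma frS pi s t : fr pi s t.+1 = \sum_(s' : S) Kp pi s s' * fr pi s' t.
Proof.
rewrite /fr /state_dist iterSr step_pt -/(state_dist _ _ _ _).
under eq_bigr do rewrite sd_lin mulr_suml.
rewrite exchange_big /=; apply: eq_bigr => s' _.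
by rewrite mulr_sumr; apply: eq_bigr => y _; rewrite mulrA.
Qed.


Lemma Kp_ge0 (pol : S -> A -> R) : is_policy pol -> forall s s', 0 <= Kp pol s s'.
Proof. case=> p0 _ s s'; apply: sumr_ge0 => a _; exact: mulr_ge0. Qed.
Arguments Kp_ge0 {pol}.


Lemma Kp_sum1 (pol : S -> A -> R) : is_policy pol -> forall s, \sum_(s' : S) Kp pol s s' = 1.
Proof.
case=> _ p1 s; rewrite /Kp exchange_big /= -(p1 s); apply: eq_bigr => a _.
by rewrite -mulr_sumr P1 mulr1.
Qed.
Arguments Kp_sum1 {pol}.


Lemma rpi_bnd (pol : S -> A -> R) : is_policy pol -> forall s, 0 <= r_pi r pol s <= 1.
Proof.
case=> p0 p1 s; rewrite /r_pi; apply/andP; split.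
  apply: sumr_ge0 => a _; apply: mulr_ge0 => //; by case/andP: (r01 s a).
rewrite -(p1 s); apply: ler_sum => a _; rewrite ler_piMr //; by case/andP: (r01 s a).
Qed.
Arguments rpi_bnd {pol}.


Lemma Kp_avg (pol : S -> A -> R) (f : S -> R) (lo hi : R) : is_policy pol ->
  (forall s, lo <= f s <= hi) -> forall s, lo <= \sum_(s' : S) Kp pol s s' * f s' <= hi.
Proof.
move=> pp hf s; apply/andP; split.
  rewrite -[lo]mulr1 -(Kp_sum1 pp s) mulr_sumr; apply: ler_sum => s' _.
  rewrite mulrC ler_wpM2l //; [exact: Kp_ge0 | by case/andP: (hf s')].
rewrite -[hi]mulr1 -(Kp_sum1 pp s) mulr_sumr; apply: ler_sum => s' _.
rewrite mulrC ler_wpM2r //; [exact: Kp_ge0 | by case/andP: (hf s')].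
Qed.
Arguments Kp_avg {pol f lo hi}.


Lemma fr_bnd (pol : S -> A -> R) : is_policy pol -> forall t s, 0 <= fr pol s t <= 1.
Proof.
move=> pp; elim=> [|t IH] s; first by rewrite fr0; exact: rpi_bnd.
rewrite frS; exact: Kp_avg.
Qed.
Arguments fr_bnd {pol}.


Definition ut pi s := (fun t : nat => gamma ^+ t * fr pi s t).

Lemma VfE pi s : Vf P r gamma pi s = limn (series (ut pi s)).
Proof. by []. Qed.

Lemma serS pi s n : series (ut pi s) n.+1 =
  r_pi r pi s + gamma * \sum_(s' : S) Kp pi s s' * series (ut pi s') n.
Proof.
rewrite /series /= big_nat_recl // /ut fr0 expr0 mul1r; congr (_ + _).
transitivity (\sum_(0 <= k < n) \sum_(s' : S) gamma * (Kp pi s s' * (gamma ^+ k * fr pi s' k))).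
  apply: eq_bigr => k _; rewrite frS mulr_sumr; apply: eq_bigr => s1 _; rewrite exprS.
  ring.
rewrite exchange_big /= mulr_sumr; apply: eq_bigr => s' _.
by rewrite -mulr_sumr -mulr_sumr.
Qed.

Lemma ser_bnd (pol : S -> A -> R) : is_policy pol -> forall n s, 0 <= series (ut pol s) n <= (1 - gamma)^-1.
Proof.
move=> pp; have [g0 g1] := andP g01.
have g1' : 0 < 1 - gamma by rewrite subr_gt0.
elim=> [|n IH] s.
  rewrite /series /= big_geq // lexx /=; rewrite invr_ge0; exact: ltW.
rewrite serS; have := Kp_avg pp IH s => /andP[h1 h2].
have := rpi_bnd pp s => /andP[h3 h4].
apply/andP; split; first by apply: addr_ge0 => //; exact: mulr_ge0.
have -> : (1 - gamma)^-1 = 1 + gamma * (1 - gamma)^-1.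
  by field; rewrite lt0r_neq0.
apply: lerD => //; exact: ler_wpM2l.
Qed.
Arguments ser_bnd {pol}.


Lemma ser_cvg (pol : S -> A -> R) : is_policy pol -> forall s, cvgn (series (ut pol s)).
Proof.
move=> pp s; apply: nondecreasing_is_cvgn.
  apply: nondecreasing_series => n _ _; rewrite /ut; apply: mulr_ge0.
    by apply: exprn_ge0; case/andP: g01.
  by case/andP: (fr_bnd pp n s).
exists (1 - gamma)^-1 => _ [n _ <-]; by case/andP: (ser_bnd pp n s).
Qed.
Arguments ser_cvg {pol}.


Lemma Vf_bnd (pol : S -> A -> R) : is_policy pol -> forall s, 0 <= Vf P r gamma pol s <= (1 - gamma)^-1.
Proof.
move=> pp s; rewrite VfE; apply/andP; split.
  apply: limr_ge; first exact: ser_cvg pp s.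
  by near=> n; case/andP: (ser_bnd pp n s).
apply: limr_le; first exact: ser_cvg pp s.
by near=> n; case/andP: (ser_bnd pp n s).
Unshelve. all: by end_near.
Qed.
Arguments Vf_bnd {pol}.


Lemma Vf_rec (pol : S -> A -> R) : is_policy pol -> forall s,
  Vf P r gamma pol s = r_pi r pol s + gamma * \sum_(s' : S) Kp pol s s' * Vf P r gamma pol s'.
Proof.
move=> pp s.
have h1 : (fun n => series (ut pol s) n.+1) @ \oo --> Vf P r gamma pol s.
  have := ser_cvg pp s; rewrite -cvg_shiftS; by [].
have h2 : (fun n => series (ut pol s) n.+1) @ \oo -->
     r_pi r pol s + gamma * \sum_(s' : S) Kp pol s s' * Vf P r gamma pol s'.
  under eq_fun do rewrite serS.
  apply: cvgD; first exact: cvg_cst.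
  apply: cvgMr; apply: cvg_fsum => s'; apply: cvgMr; exact: ser_cvg.
exact: (cvg_unique (@Rhausdorff R) h1 h2).
Qed.
Arguments Vf_rec {pol}.


Lemma Vf_bellman (pol : S -> A -> R) : is_policy pol -> forall s,
  Vf P r gamma pol s = \sum_(a : A) pol s a * Qf P r gamma pol s a.
Proof.
move=> pp s; rewrite Vf_rec // /Qf /r_pi.
under [RHS]eq_bigr do rewrite mulrDr.
rewrite big_split /=; congr (_ + _).
rewrite /Kp; under eq_bigr do rewrite mulr_suml.
rewrite exchange_big /= mulr_sumr; apply: eq_bigr => a _.
rewrite mulr_sumr mulr_sumr mulr_sumr; apply: eq_bigr => s' _; ring.
Qed.
Arguments Vf_bellman {pol}.

Local Notation V := (Vf P r gamma).
Local Notation Q := (Qf P r gamma).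
Local Notation U := (Adv P r gamma).
Local Notation K := Kp.

Lemma super_nonneg (pol : S -> A -> R) (D : S -> R) : is_policy pol ->
  (forall s, gamma * \sum_(s' : S) K pol s s' * D s' <= D s) -> forall s, 0 <= D s.
Proof.
move=> pp hD s.
case: (@arg_minP _ R S s predT D isT) => s0 _ Hmin.
have [g0 g1] := andP g01.
have h1 : gamma * D s0 <= D s0.
  apply: le_trans (hD s0); apply: ler_wpM2l => //.
  rewrite -[X in X <= _]mul1r -(Kp_sum1 pp s0) mulr_suml.
  apply: ler_sum => s' _; apply: ler_wpM2l; [exact: Kp_ge0 | exact: Hmin].
have : 0 <= D s0 by nra.
move=> h; apply: le_trans h _; exact: Hmin.
Qed.

Lemma qsum (pol : S -> A -> R) (W : S -> R) s :
  \sum_(a : A) pol s a * (r s a + gamma * \sum_(s' : S) P s a s' * W s') =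
  r_pi r pol s + gamma * \sum_(s' : S) K pol s s' * W s'.
Proof.
under eq_bigr do rewrite mulrDr.
rewrite big_split /=; congr (_ + _).
rewrite /Kp [RHS]mulr_sumr; under [RHS]eq_bigr do rewrite mulr_suml mulr_sumr.
rewrite [RHS]exchange_big /=; apply: eq_bigr => a _.
rewrite mulr_sumr mulr_sumr; apply: eq_bigr => s' _; ring.
Qed.

Lemma Usum (pol : S -> A -> R) s : is_policy pol -> \sum_(a : A) pol s a * U pol s a = 0.
Proof.
move=> pp; rewrite /Adv; under eq_bigr do rewrite mulrBr.
rewrite sumrB -mulr_suml; case: (pp) => _ ->; rewrite mul1r.
rewrite -(Vf_bellman pp s); exact: subrr.
Qed.

Lemma Vdiff (pol pol' : S -> A -> R) s : is_policy pol -> is_policy pol' ->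
  V pol' s - V pol s = \sum_(a : A) pol' s a * U pol s a
     + gamma * \sum_(s' : S) K pol' s s' * (V pol' s' - V pol s').
Proof.
move=> pp pp'.
have e1 : \sum_(a : A) pol' s a * U pol s a =
   r_pi r pol' s + gamma * \sum_(s' : S) K pol' s s' * V pol s' - V pol s.
  rewrite -qsum /Adv; under eq_bigr do rewrite mulrBr.
  rewrite sumrB -mulr_suml; case: (pp') => _ ->; by rewrite mul1r.
rewrite e1 (Vf_rec pp' s).
have -> : \sum_(s' : S) K pol' s s' * (V pol' s' - V pol s') =
  \sum_(s' : S) K pol' s s' * V pol' s' - \sum_(s' : S) K pol' s s' * V pol s'.
  by rewrite -sumrB; apply: eq_bigr => s' _; rewrite mulrBr.
ring.
Qed.

Lemma improve (pol pol' : S -> A -> R) : is_policy pol -> is_policy pol' ->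
  (forall s, 0 <= \sum_(a : A) pol' s a * U pol s a) ->
  forall s, \sum_(a : A) pol' s a * U pol s a <= V pol' s - V pol s.
Proof.
move=> pp pp' hg.
have hD : forall s, 0 <= V pol' s - V pol s.
  apply: (@super_nonneg pol' (fun s => V pol' s - V pol s) pp') => s; rewrite Vdiff //; rewrite lerDr; exact: hg.
move=> s; rewrite Vdiff // lerDl; apply: mulr_ge0; first by case/andP: g01.
apply: sumr_ge0 => s' _; apply: mulr_ge0 => //; exact: Kp_ge0.
Qed.

Lemma super_ge (W : S -> R) (pol : S -> A -> R) : is_policy pol ->
  (forall s a, r s a + gamma * \sum_(s' : S) P s a s' * W s' <= W s) ->
  forall s, V pol s <= W s.
Proof.
move=> pp hW s; rewrite -subr_ge0; move: s; apply: (@super_nonneg pol (fun s => W s - V pol s) pp) => s.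
have h1 : r_pi r pol s + gamma * \sum_(s' : S) K pol s s' * W s' <= W s.
  rewrite -qsum; case: (pp) => p0 p1.
  rewrite -[X in _ <= X]mul1r -(p1 s) mulr_suml; apply: ler_sum => a _.
  apply: ler_wpM2l; [exact: p0 | exact: hW].
rewrite (Vf_rec pp s).
have -> : \sum_(s' : S) K pol s s' * (W s' - V pol s') =
  \sum_(s' : S) K pol s s' * W s' - \sum_(s' : S) K pol s s' * V pol s'.
  by rewrite -sumrB; apply: eq_bigr => s' _; rewrite mulrBr.
lra.
Qed.

Lemma Q_bnd (pol : S -> A -> R) s a : is_policy pol ->
  0 <= Q pol s a <= (1 - gamma)^-1.
Proof.
move=> pp; have [g0 g1] := andP g01.
have hv := Vf_bnd pp.
have h : 0 <= \sum_(s' : S) P s a s' * V pol s' <= (1 - gamma)^-1.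
  apply/andP; split.
    apply: sumr_ge0 => s' _; apply: mulr_ge0 => //; by case/andP: (hv s').
  have e : (1 - gamma)^-1 = \sum_(s' : S) P s a s' * (1 - gamma)^-1.
    by rewrite -mulr_suml P1 mul1r.
  rewrite [X in _ <= X]e; apply: ler_sum => s' _.
  apply: ler_wpM2l; [exact: P0 | by case/andP: (hv s')].
have [h1 h2] := andP h; have [h3 h4] := andP (r01 s a).
rewrite /Qf; apply/andP; split; first by apply: addr_ge0 => //; exact: mulr_ge0.
have -> : (1 - gamma)^-1 = 1 + gamma * (1 - gamma)^-1.
  by field; rewrite lt0r_neq0 // subr_gt0.
apply: lerD => //; exact: ler_wpM2l.
Qed.

Lemma U_bnd (pol : S -> A -> R) s a : is_policy pol ->
  - (1 - gamma)^-1 <= U pol s a <= (1 - gamma)^-1.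
Proof.
move=> pp; have := Q_bnd pol s a pp; have := Vf_bnd pp s.
rewrite /Adv; move=> /andP[h1 h2] /andP[h3 h4]; apply/andP; split; lra.
Qed.


Lemma sigmoid_bnd (y : R) : 0 < sigmoid y <= 1.
Proof.
rewrite /sigmoid; have he := expR_gt0 (- y).
apply/andP; split; first by rewrite divr_gt0 // ltr_pwDr.
by rewrite ler_pdivrMr ?mul1r ?lerDl ?ltW // ltr_pwDr.
Qed.

Lemma sigmoid_half (y : R) : 0 <= y -> 2^-1 <= sigmoid y.
Proof.
move=> hy; rewrite /sigmoid; have he := expR_gt0 (- y).
have he1 : expR (- y) <= 1 by rewrite expR_le1 oppr_le0.
rewrite ler_pdivlMr ?ltr_pwDr // mulrC -ler_pdivlMr // ?invr_gt0 // invrK.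
lra.
Qed.

Definition fsp (pol : S -> A -> R) := is_policy pol /\ full_support pol.

Lemma pol_le1 (pol : S -> A -> R) (s : S) (a : A) : is_policy pol -> pol s a <= 1.
Proof. case=> p0 p1; rewrite -(p1 s); exact: sum_le_one_term. Qed.

Lemma pol_ex (pol : S -> A -> R) (s : S) : is_policy pol -> exists a, 0 < pol s a.
Proof.
case=> p0 p1; have h : \sum_(a : A) pol s a <> 0 by rewrite p1; apply/eqP; exact: oner_neq0.
have [a /andP[_ ha]] := psumr_neq0P (fun a _ => p0 s a) h; by exists a.
Qed.

Definition xg (eta : R) (alpha : R) (pol : S -> A -> R) (s : S) (a : A) := alpha * dg_weight P r gamma eta pol s a * U pol s a.

Lemma Z_pos (eta : R) (alpha : R) (pol : S -> A -> R) (s : S) : is_policy pol -> 0 < dg_Z P r gamma eta alpha pol s.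
Proof.
move=> pp; have [a ha] := pol_ex pol s pp; case: (pp) => p0 _.
rewrite /dg_Z; apply: (lt_le_trans _ (sum_le_one_term _ _ _ a _)).
  by apply: mulr_gt0 => //; exact: expR_gt0.
move=> b; apply: mulr_ge0 => //; exact: expR_ge0.
Qed.

Lemma step_fsp (eta : R) (alpha : R) (pol : S -> A -> R) : fsp pol -> fsp (dg_step P r gamma eta alpha pol).
Proof.
case=> pp fs; have hZ := Z_pos eta alpha pol ^~ pp.
split; last by move=> s a; rewrite /dg_step divr_gt0 // mulr_gt0 // expR_gt0.
split; first by move=> s a; apply: ltW; rewrite /dg_step divr_gt0 // mulr_gt0 // expR_gt0.
move=> s; rewrite /dg_step -mulr_suml; apply: divff; exact: (lt0r_neq0 (hZ s)).
Qed.

Lemma Zsub1 (eta : R) (alpha : R) (pol : S -> A -> R) (s : S) : is_policy pol ->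
  dg_Z P r gamma eta alpha pol s - 1 =
  \sum_(a : A) pol s a * (expR (xg eta alpha pol s a) - 1).
Proof.
case=> _ p1; rewrite /dg_Z.
transitivity (\sum_(a : A) pol s a * expR (xg eta alpha pol s a) - \sum_(a : A) pol s a);
  first by rewrite p1.
rewrite -sumrB; apply: eq_bigr => a _; by rewrite mulrBr mulr1.
Qed.

Lemma gain_eq (eta : R) (alpha : R) (pol : S -> A -> R) (s : S) : is_policy pol ->
  \sum_(a : A) dg_step P r gamma eta alpha pol s a * U pol s a =
  (\sum_(a : A) pol s a * ((expR (xg eta alpha pol s a) - 1) * U pol s a))
     / dg_Z P r gamma eta alpha pol s.
Proof.
move=> pp; rewrite /dg_step.
have -> : \sum_(a : A) pol s a * ((expR (xg eta alpha pol s a) - 1) * U pol s a) =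
   \sum_(a : A) pol s a * expR (xg eta alpha pol s a) * U pol s a
   - \sum_(a : A) pol s a * U pol s a.
  rewrite -sumrB; apply: eq_bigr => a _; ring.
rewrite Usum // subr0 mulr_suml; apply: eq_bigr => a _; rewrite /xg; ring.
Qed.

Lemma w_ge0 (eta : R) (pol : S -> A -> R) (s : S) (a : A) : 0 <= dg_weight P r gamma eta pol s a <= 1.
Proof. by have /andP[h1 h2] := sigmoid_bnd (U pol s a * - ln (pol s a) / eta); rewrite /dg_weight (ltW h1) h2. Qed.

Lemma term_ge0 (eta : R) (alpha : R) (pol : S -> A -> R) (s : S) (a : A) : 0 <= alpha -> is_policy pol ->
  0 <= pol s a * ((expR (xg eta alpha pol s a) - 1) * U pol s a).
Proof.
move=> ha [p0 _]; apply: mulr_ge0 => //; rewrite /xg.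
apply: expm1_mul_ge0; apply: mulr_ge0 => //; by case/andP: (w_ge0 eta pol s a).
Qed.

Lemma gain_ge0 (eta : R) (alpha : R) (pol : S -> A -> R) (s : S) : 0 <= alpha -> is_policy pol ->
  0 <= \sum_(a : A) dg_step P r gamma eta alpha pol s a * U pol s a.
Proof.
move=> ha pp; rewrite gain_eq //; apply: divr_ge0; last exact: ltW (Z_pos eta alpha pol s pp).
apply: sumr_ge0 => a _; exact: term_ge0.
Qed.

Lemma Z_le (eta : R) (alpha : R) (pol : S -> A -> R) (s : S) : 0 <= alpha -> is_policy pol ->
  dg_Z P r gamma eta alpha pol s <= expR (alpha * (1 - gamma)^-1).
Proof.
move=> ha pp; case: (pp) => p0 p1.
have e : expR (alpha * (1 - gamma)^-1) = \sum_(a : A) pol s a * expR (alpha * (1 - gamma)^-1).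
  by rewrite -mulr_suml p1 mul1r.
rewrite [X in _ <= X]e; apply: ler_sum => a _; apply: ler_wpM2l => //.
rewrite ler_expR; have /andP[w0 w1] := w_ge0 eta pol s a.
have /andP[u0 u1] := U_bnd pol s a pp.
have hM : 0 <= (1 - gamma)^-1 by rewrite invr_ge0 subr_ge0; case/andP: g01 => _ /ltW.
rewrite -mulrA; apply: ler_wpM2l => //.
have [hu|hu] := leP 0 (U pol s a).
  apply: le_trans u1; rewrite ler_piMl //.
apply: le_trans hM; apply: mulr_ge0_le0 => //; exact: ltW.
Qed.


Section Iter.
Variables (eta alpha : R) (pi0 pistar : S -> A -> R).
Hypotheses (heta : 0 < eta) (halpha : 0 < alpha) (hpi0 : fsp pi0)
  (hopt : optimal_policy P r gamma pistar).

Local Notation pit := (dg_iter P r gamma eta alpha pi0).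

Lemma pitS t : pit t.+1 = dg_step P r gamma eta alpha (pit t).
Proof. by []. Qed.

Lemma pit_fsp t : fsp (pit t).
Proof. elim: t => [|t IH] //; rewrite pitS; exact: step_fsp. Qed.

Lemma pit_pol t : is_policy (pit t).
Proof. by case: (pit_fsp t). Qed.

Lemma gain_le t s :
  \sum_(a : A) pit t.+1 s a * U (pit t) s a <= V (pit t.+1) s - V (pit t) s.
Proof.
apply: improve; [exact: pit_pol | exact: pit_pol|] => s'.
rewrite pitS; apply: gain_ge0; [exact: ltW | exact: pit_pol].
Qed.

Lemma gain_ge0' t s : 0 <= \sum_(a : A) pit t.+1 s a * U (pit t) s a.
Proof. rewrite pitS; apply: gain_ge0; [exact: ltW | exact: pit_pol]. Qed.

Lemma V_mono s : {homo (fun t => V (pit t) s) : n m / (n <= m)%N >-> n <= m}.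
Proof.
apply: homo_leq; [exact: lexx | move=> y x z; exact: le_trans|] => t.
rewrite -subr_ge0; apply: le_trans (gain_le t s); exact: gain_ge0'.
Qed.

Lemma V_le_opt t s : V (pit t) s <= V pistar s.
Proof. case: hopt => _ h; apply: h; exact: pit_pol. Qed.

Definition Vinf s := limn (fun t => V (pit t) s).

Lemma cV s : (fun t => V (pit t) s) @ \oo --> Vinf s.
Proof.
apply: nondecreasing_is_cvgn; first exact: V_mono.
exists (V pistar s) => _ [t _ <-]; exact: V_le_opt.
Qed.

Definition Qinf s a := r s a + gamma * \sum_(s' : S) P s a s' * Vinf s'.

Lemma cQ s a : (fun t => Q (pit t) s a) @ \oo --> Qinf s a.
Proof.
rewrite /Qf /Qinf; apply: cvgD; first exact: cvg_cst.
apply: cvgMr; apply: cvg_fsum => s'; apply: cvgMr; exact: cV.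
Qed.

Lemma cU s a : (fun t => U (pit t) s a) @ \oo --> Qinf s a - Vinf s.
Proof. rewrite /Adv; apply: cvgB; [exact: cQ | exact: cV]. Qed.

Lemma cgain s : (fun t => \sum_(a : A) pit t.+1 s a * U (pit t) s a) @ \oo --> 0.
Proof.
apply: (@squeeze_cvgr _ _ _ _ (fun=> 0) (fun t => V (pit t.+1) s - V (pit t) s)).
- by near=> t; rewrite gain_ge0' gain_le.
- exact: cvg_cst.
- rewrite -(subrr (Vinf s)); apply: cvgB; last exact: cV.
  have := cV s; rewrite -cvg_shiftS; by [].
Unshelve. all: by end_near.
Qed.

Definition hh t s := \sum_(a : A) pit t s a *
   ((expR (xg eta alpha (pit t) s a) - 1) * U (pit t) s a).

Lemma hh_ge0 t s : 0 <= hh t s.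
Proof. apply: sumr_ge0 => a _; apply: term_ge0; [exact: ltW | exact: pit_pol]. Qed.

Lemma chh s : (fun t => hh t s) @ \oo --> 0.
Proof.
set C := expR (alpha * (1 - gamma)^-1).
apply: (@squeeze_cvgr _ _ _ _ (fun=> 0)
   (fun t => C * \sum_(a : A) pit t.+1 s a * U (pit t) s a)).
- near=> t; rewrite hh_ge0 /=.
  have e : hh t s = (\sum_(a : A) pit t.+1 s a * U (pit t) s a)
                     * dg_Z P r gamma eta alpha (pit t) s.
    rewrite pitS gain_eq; last exact: pit_pol.
    rewrite -mulrA mulVf ?mulr1 //; apply: lt0r_neq0; apply: Z_pos; exact: pit_pol.
  rewrite e mulrC; apply: ler_wpM2r; first exact: gain_ge0'.
  apply: Z_le; [exact: ltW | exact: pit_pol].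
- exact: cvg_cst.
- rewrite -[X in _ --> X](mulr0 C); apply: cvgMr; exact: cgain.
Unshelve. all: by end_near.
Qed.

Lemma ckk s a : (fun t => pit t s a *
   ((expR (xg eta alpha (pit t) s a) - 1) * U (pit t) s a)) @ \oo --> 0.
Proof.
apply: (@squeeze_cvgr _ _ _ _ (fun=> 0) (fun t => hh t s)).
- near=> t; apply/andP; split; first by apply: term_ge0; [exact: ltW | exact: pit_pol].
  apply: sum_le_one_term => b; apply: term_ge0; [exact: ltW | exact: pit_pol].
- exact: cvg_cst.
- exact: chh.
Unshelve. all: by end_near.
Qed.


Lemma w_half t s a : 0 <= U (pit t) s a -> 2^-1 <= dg_weight P r gamma eta (pit t) s a.
Proof.
move=> hu; apply: sigmoid_half; apply: divr_ge0; last exact: ltW.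
apply: mulr_ge0 => //; rewrite oppr_ge0; apply: ln_le0; apply: pol_le1; exact: pit_pol.
Qed.

Lemma Ainf_le0 s a : Qinf s a - Vinf s <= 0.
Proof.
rewrite leNgt; apply/negP => hd; set d := Qinf s a - Vinf s in hd.
set c := alpha * d / 4.
have hc : 0 < c by rewrite /c; apply: divr_gt0 => //; exact: mulr_gt0.
have [N1 HN1] := cvg_ev (cU s a) (divr_gt0 hd (ltr0Sn R 1)).
have hU : forall t, (N1 <= t)%N -> d / 2 <= U (pit t) s a.
  move=> t /HN1; rewrite ltr_norml => /andP[_ h]; have e : d = Qinf s a - Vinf s by []; lra.
have hx : forall t, (N1 <= t)%N -> c <= xg eta alpha (pit t) s a.
  move=> t ht; have hu := hU t ht.
  have hu0 : 0 <= U (pit t) s a by apply: le_trans hu; apply: divr_ge0 => //; exact: ltW.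
  have hw := w_half t s a hu0.
  have -> : xg eta alpha (pit t) s a = alpha * (dg_weight P r gamma eta (pit t) s a * U (pit t) s a).
    by rewrite /xg mulrA.
  have -> : c = alpha * (d / 4) by rewrite /c mulrA.
  apply: ler_wpM2l; first exact: ltW.
  have -> : d / 4 = 2^-1 * (d / 2) by field.
  apply: (@ler_pM R (2^-1) (dg_weight P r gamma eta (pit t) s a) (d/2) (U (pit t) s a)); [by rewrite invr_ge0 ler0n | apply: divr_ge0; [exact: ltW | by rewrite ler0n] | exact: hw | exact: hu].
set E := expR (1 : R).
have hE : 0 < E := expR_gt0 1.
set eps := c / (2 * E + c).
have hden : 0 < 2 * E + c by apply: addr_gt0 => //; exact: mulr_gt0.
have heps : 0 < eps by apply: divr_gt0.
have heps1 : eps <= 1.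
  rewrite ler_pdivrMr // mul1r; have : 0 < 2 * E by apply: mulr_gt0.
  move=> ?; lra.
have hepsE : eps * expR eps <= c / 2.
  have h1 : expR eps <= E by rewrite ler_expR.
  apply: le_trans (_ : eps * E <= _); first by apply: ler_wpM2l => //; exact: ltW.
  rewrite /eps mulrAC ler_pdivrMr //.
  have : 0 <= c * E by apply: mulr_ge0; exact: ltW.
  nra.
set th := c * eps / (2 * alpha).
have hth : 0 < th by apply: divr_gt0; [exact: mulr_gt0 | exact: mulr_gt0].
have [N2 HN2] := cvg_ev (chh s) hth.
have hZ : forall t, (N2 <= t)%N -> dg_Z P r gamma eta alpha (pit t) s < 1 + c.
  move=> t /HN2; rewrite sub0r normrN ger0_norm ?hh_ge0 // => hht.
  have e1 := Zsub1 eta alpha (pit t) s (pit_pol t).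
  have h2 : \sum_(b : A) pit t s b * (expR (xg eta alpha (pit t) s b) - 1) <=
            \sum_(b : A) pit t s b * (eps * expR eps
               + (expR (xg eta alpha (pit t) s b) - 1) * xg eta alpha (pit t) s b / eps).
    apply: ler_sum => b _; apply: ler_wpM2l; first by case: (pit_pol t) => p0 _; exact: p0.
    exact: expm1_split.
  have h3 : \sum_(b : A) pit t s b * (eps * expR eps
               + (expR (xg eta alpha (pit t) s b) - 1) * xg eta alpha (pit t) s b / eps)
            <= eps * expR eps + alpha / eps * hh t s.
    have e3 : \sum_(b : A) pit t s b * (eps * expR eps
               + (expR (xg eta alpha (pit t) s b) - 1) * xg eta alpha (pit t) s b / eps) =
       eps * expR eps + \sum_(b : A) pit t s b *
          ((expR (xg eta alpha (pit t) s b) - 1) * xg eta alpha (pit t) s b / eps).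
      under eq_bigr do rewrite mulrDr.
      rewrite big_split /= -mulr_suml; case: (pit_pol t) => _ ->; by rewrite mul1r.
    rewrite e3 lerD2l /hh mulr_sumr; apply: ler_sum => b _.
    case: (pit_pol t) => p0 _; have hp := p0 s b.
    have /andP[w0 w1] := w_ge0 eta (pit t) s b.
    have hk : 0 <= (expR (xg eta alpha (pit t) s b) - 1) * U (pit t) s b.
      rewrite /xg; apply: expm1_mul_ge0; apply: mulr_ge0 => //; exact: ltW.
    rewrite /xg.
    set k := (expR (alpha * dg_weight P r gamma eta (pit t) s b * U (pit t) s b) - 1) in hk *.
    set w := dg_weight P r gamma eta (pit t) s b in w0 w1 k hk *.
    have -> : pit t s b * (k * (alpha * w * U (pit t) s b) / eps) =
              (alpha / eps) * (pit t s b * (k * U (pit t) s b)) * w.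
      by field; exact: lt0r_neq0.
    rewrite -[X in _ <= X]mulr1; apply: ler_wpM2l => //.
    apply: mulr_ge0; first by apply: divr_ge0; apply: ltW.
    exact: mulr_ge0.
  have h4 : alpha / eps * hh t s < c / 2.
    have -> : c / 2 = alpha / eps * th by rewrite /th; field; rewrite !lt0r_neq0.
    rewrite ltr_pM2l //; exact: divr_gt0.
  lra.
have hmono : forall t, (N1 + N2 <= t)%N -> pit t s a <= pit t.+1 s a.
  move=> t ht.
  have ht1 : (N1 <= t)%N by apply: leq_trans ht; exact: leq_addr.
  have ht2 : (N2 <= t)%N by apply: leq_trans ht; exact: leq_addl.
  have hz := hZ t ht2; have hZp := Z_pos eta alpha (pit t) s (pit_pol t).
  rewrite pitS /dg_step ler_pdivlMr //; apply: ler_wpM2l.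
    by case: (pit_pol t) => p0 _; exact: p0.
  apply: ltW; apply: lt_le_trans hz _; apply: le_trans (expR_ge1Dx c) _.
  rewrite ler_expR; exact: hx.
set N := (N1 + N2)%N.
have hp : forall n, pit N s a <= pit (N + n)%N s a.
  elim=> [|n IH]; first by rewrite addn0.
  apply: le_trans IH _; rewrite addnS; apply: hmono; exact: leq_addr.
have hpN : 0 < pit N s a by case: (pit_fsp N) => _; exact.
set kap := pit N s a * ((expR c - 1) * (d / 2)).
have hec : 0 < expR c - 1 by rewrite subr_gt0 expR_gt1.
have hkap : 0 < kap by apply: mulr_gt0 => //; apply: mulr_gt0 => //; exact: divr_gt0.
have [N3 HN3] := cvg_ev (ckk s a) hkap.
have hN3 := HN3 (N + N3)%N (leq_addl _ _).
move: hN3; rewrite sub0r normrN ger0_norm; last first.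
  apply: term_ge0; [exact: ltW | exact: pit_pol].
rewrite ltNge; move/negP; apply.
have ht1 : (N1 <= N + N3)%N by rewrite /N -addnA leq_addr.
rewrite /kap; apply: ler_pM.
- exact: ltW.
- apply: mulr_ge0; [exact: ltW | apply: divr_ge0 => //; exact: ltW].
- exact: hp.
apply: ler_pM.
- exact: ltW.
- apply: divr_ge0 => //; exact: ltW.
- by rewrite lerD2r ler_expR; exact: hx.
exact: hU.
Qed.

Lemma Vinf_eq s : Vinf s = V pistar s.
Proof.
apply/eqP; rewrite eq_le; apply/andP; split.
  apply: limr_le; first exact: (cvgP _ (cV s)).
  by near=> t; exact: V_le_opt.
have [pp _] := hopt.
apply: super_ge => // s' a; have := Ainf_le0 s' a; rewrite /Qinf subr_le0; exact.
Unshelve. all: by end_near.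
Qed.

Lemma cVs s : (fun t => V (pit t) s) @ \oo --> V pistar s.
Proof. rewrite -Vinf_eq; exact: cV. Qed.

Lemma Qs_le s a : Q pistar s a <= V pistar s.
Proof.
have := Ainf_le0 s a; rewrite subr_le0 /Qinf /Qf Vinf_eq.
have -> : \sum_(s' : S) P s a s' * Vinf s' = \sum_(s' : S) P s a s' * V pistar s'.
  by apply: eq_bigr => s' _; rewrite Vinf_eq.
exact.
Qed.

Lemma supp s a : 0 < pistar s a -> Q pistar s a = V pistar s.
Proof.
move=> hp; have [pp _] := hopt; case: (pp) => p0 p1.
have hs : \sum_(b : A) pistar s b * (V pistar s - Q pistar s b) = 0.
  under eq_bigr do rewrite mulrBr.
  rewrite sumrB -mulr_suml p1 mul1r -Vf_bellman //; exact: subrr.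
have hge : forall b, true -> 0 <= pistar s b * (V pistar s - Q pistar s b).
  by move=> b _; apply: mulr_ge0 => //; rewrite subr_ge0; exact: Qs_le.
have := psumr_eq0P hge hs (i:=a) isT.
move/eqP; rewrite mulf_eq0 (gt_eqF hp) /= subr_eq0 => /eqP ->; by [].
Qed.

Hypothesis huniq : forall pi, optimal_policy P r gamma pi -> pi = pistar.

Lemma opt_of (pol : S -> A -> R) : is_policy pol ->
  (forall s a, 0 < pol s a -> Q pistar s a = V pistar s) -> pol = pistar.
Proof.
move=> pp hs; apply: huniq; split => //.
have [pps hop] := hopt.
have hVs : forall s, V pistar s = r_pi r pol s + gamma * \sum_(s' : S) K pol s s' * V pistar s'.
  move=> s; rewrite -qsum; case: (pp) => p0 p1.
  rewrite -[LHS]mul1r -(p1 s) mulr_suml; apply: eq_bigr => a _.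
  have [h|h] := eqVneq (pol s a) 0; first by rewrite h !mul0r.
  have hpos : 0 < pol s a by rewrite lt0r h p0.
  by rewrite -(hs s a hpos) /Qf.
have hD : forall s, V pistar s - V pol s =
   gamma * \sum_(s' : S) K pol s s' * (V pistar s' - V pol s').
  move=> s; rewrite hVs (Vf_rec pp s).
  have -> : \sum_(s' : S) K pol s s' * (V pistar s' - V pol s') =
    \sum_(s' : S) K pol s s' * V pistar s' - \sum_(s' : S) K pol s s' * V pol s'.
    by rewrite -sumrB; apply: eq_bigr => s' _; rewrite mulrBr.
  ring.
have hD' : forall s, V pol s - V pistar s =
   gamma * \sum_(s' : S) K pol s s' * (V pol s' - V pistar s').
  move=> s; rewrite hVs (Vf_rec pp s).
  have -> : \sum_(s' : S) K pol s s' * (V pol s' - V pistar s') =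
    \sum_(s' : S) K pol s s' * V pol s' - \sum_(s' : S) K pol s s' * V pistar s'.
    by rewrite -sumrB; apply: eq_bigr => s' _; rewrite mulrBr.
  ring.
have h2 : forall s, 0 <= V pol s - V pistar s.
  apply: (@super_nonneg pol (fun s => V pol s - V pistar s) pp) => s /=.
  by rewrite [X in _ <= X]hD'.
move=> pi' pp' s; apply: le_trans (hop pi' pp' s) _.
by rewrite -subr_ge0.
Qed.

Lemma pistar_det s a1 : Q pistar s a1 = V pistar s -> forall a, pistar s a = (a == a1)%:R.
Proof.
move=> hq a.
set pol := fun s' b => if s' == s then ((b == a1)%:R : R) else pistar s' b.
have [pps _] := hopt; case: (pps) => p0 p1.
have pp : is_policy pol.
  split.
    move=> s' b; rewrite /pol; case: (s' == s) => //; exact: ler0n.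
  move=> s'; rewrite /pol; case: (s' == s) => //.
  rewrite (bigD1 a1) //= eqxx big1 ?addr0 // => b /negbTE ->; by [].
have e := opt_of pol pp.
have : pol = pistar.
  apply: e => s' b; rewrite /pol; case: eqP => [-> |_]; last exact: supp.
  case: eqP => [-> //|]; by rewrite ltxx.
move=> <-; by rewrite /pol eqxx.
Qed.

Lemma Qt_le t s a : Q (pit t) s a <= Q pistar s a.
Proof.
rewrite /Qf lerD2l; apply: ler_wpM2l; first by case/andP: g01.
apply: ler_sum => s' _; apply: ler_wpM2l => //; exact: V_le_opt.
Qed.

Lemma pit_gap t s b : pit t s b * (V pistar s - Q pistar s b) <= V pistar s - V (pit t) s.
Proof.
have pp := pit_pol t; case: (pp) => p0 p1.
have e : V pistar s - V (pit t) s = \sum_(c : A) pit t s c * (V pistar s - Q (pit t) s c).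
  under eq_bigr do rewrite mulrBr.
  by rewrite sumrB -mulr_suml p1 mul1r -Vf_bellman.
rewrite e; apply: le_trans (sum_le_one_term _ _ _ b _).
  apply: ler_wpM2l => //; rewrite lerD2l lerN2; exact: Qt_le.
move=> c; apply: mulr_ge0 => //; rewrite subr_ge0; apply: le_trans (Qt_le t s c) _.
exact: Qs_le.
Qed.

Lemma cpol s a : (fun t => pit t s a) @ \oo --> pistar s a.
Proof.
have [pps _] := hopt.
have [a1 ha1] := pol_ex pistar s pps.
have hdet := pistar_det s a1 (supp s a1 ha1).
have hoth : forall b, b != a1 -> (fun t => pit t s b) @ \oo --> 0.
  move=> b hb.
  have hlt : Q pistar s b < V pistar s.
    rewrite lt_neqAle Qs_le andbT; apply/eqP => hqb.
    have h1 := pistar_det s b hqb b; rewrite hdet eqxx (negbTE hb) /= in h1.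
    by move/eqP: h1; rewrite eq_sym oner_eq0.
  set D := V pistar s - Q pistar s b.
  have hD : 0 < D by rewrite /D subr_gt0.
  apply: (@squeeze_cvgr _ _ _ _ (fun=> 0) (fun t => (V pistar s - V (pit t) s) / D)).
  - near=> t; apply/andP; split; first by case: (pit_pol t) => p0 _; exact: p0.
    rewrite ler_pdivlMr //; exact: pit_gap.
  - exact: cvg_cst.
  - have -> : (0 : R) = (V pistar s - V pistar s) / D by rewrite subrr mul0r.
    apply: cvgMl; apply: cvgB; [exact: cvg_cst | exact: cVs].
have [->|hne] := eqVneq a a1; last by rewrite hdet (negbTE hne); exact: hoth.
rewrite hdet eqxx.
have e : forall t, pit t s a1 = 1 - \sum_(c : A) (if c == a1 then 0 else pit t s c).
  move=> t; case: (pit_pol t) => _ p1.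
  rewrite -(p1 s) (bigD1 a1) //= [X in _ - X](bigD1 a1) //= eqxx add0r.
  have -> : \sum_(i | i != a1) (if i == a1 then 0 else pit t s i) = \sum_(i | i != a1) pit t s i.
    by apply: eq_bigr => i /negbTE ->.
  by rewrite addrK.
under eq_fun do rewrite e.
suff h : (fun t => 1 - \sum_(c : A) (if c == a1 then 0 else pit t s c)) @ \oo --> (1 - 0 : R).
  by rewrite subr0 in h; exact: h.
apply: cvgB; first exact: cvg_cst.
suff h2 : (fun t => \sum_(c : A) (if c == a1 then 0 else pit t s c)) @ \oo --> \sum_(c : A) (0 : R).
  by rewrite big1_eq in h2.
apply: cvg_fsum => c; case: (boolP (c == a1)) => hc; [exact: cvg_cst | exact: hoth].
Unshelve. all: by end_near.
Qed.

Lemma cVrho (rho : S -> R) : (fun t => Vrho P r gamma rho (pit t)) @ \oo --> Vrho P r gamma rho pistar.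
Proof. apply: cvg_fsum => s; apply: cvgMr; exact: cVs. Qed.

End Iter.


End Bellman.


Theorem theorem8 (R : realType) (S A : finType)
    (P : S -> A -> S -> R) (r : S -> A -> R) (gamma : R) (rho : S -> R)
    (pistar : S -> A -> R) (eta : R) :
  (forall s a s', 0 <= P s a s') ->
  (forall s a, \sum_(s' : S) P s a s' = 1) ->
  (forall s a, 0 <= r s a <= 1) ->
  0 <= gamma < 1 ->
  (forall s, 0 <= rho s) -> \sum_(s : S) rho s = 1 ->
  (* pistar is an optimal policy, and the unique one *)
  optimal_policy P r gamma pistar ->
  (forall pi, optimal_policy P r gamma pi -> pi = pistar) ->
  (* full reachability *)
  (exists dmin : R, 0 < dmin /\
     forall pi, is_policy pi -> full_support pi ->
       forall s, dmin <= occ P gamma rho pi s) ->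
  0 < eta ->
  forall theta0 : S -> A -> R,
  exists alpha0 : R, 0 < alpha0 /\
    forall alpha : R, 0 < alpha -> alpha <= alpha0 ->
      let pi_t := dg_iter P r gamma eta alpha (softmax theta0) in
      ((fun t => Vrho P r gamma rho (pi_t t)) @ \oo --> Vrho P r gamma rho pistar) /\
      (forall s a, (fun t => pi_t t s a) @ \oo --> pistar s a).
Proof.
move=> P0 P1 r01 g01 rho0 rho1 hopt huniq _ heta theta0.
exists 1; split; first exact: ltr01.
move=> alpha ha _ pi_t.
have [pps _] := hopt.
have hden : forall s, 0 < \sum_(a : A) expR (theta0 s a).
  move=> s; have [a _] := pol_ex pistar s pps.
  apply: (lt_le_trans _ (sum_le_one_term _ _ _ a _)); first exact: expR_gt0.
  move=> b; exact: expR_ge0.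
have hpi0 : fsp (softmax theta0).
  split; last by move=> s a; rewrite /softmax divr_gt0 // expR_gt0.
  split; first by move=> s a; rewrite /softmax divr_ge0 // ?expR_ge0 // ltW.
  move=> s; rewrite /softmax -mulr_suml divff //; exact: lt0r_neq0.
split.
- exact: (cVrho P r gamma P0 P1 r01 g01 eta alpha (softmax theta0) pistar heta ha hpi0 hopt rho).
- move=> s a; exact: (cpol P r gamma P0 P1 r01 g01 eta alpha (softmax theta0) pistar heta ha hpi0 hopt huniq s a).
Qed.
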